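(* A $t$-$(v,k,\lambda)$ design has a zero-sum $2$-flow if and only if it is even.
   Context: A $t$-$(v,k,\lambda)$ design is a pair $(X,\mathcal{B})$ with $|X|=v$ and $\mathcal{B}$ a collection of $k$-subsets of $X$ such that every $t$-subset of $X$ lies in exactly $\lambda$ blocks; let $r$ be the number of blocks containing a given point. A design is $\alpha$-resolvable if $\mathcal{B}$ can be partitioned into classes ($\alpha$-parallel classes) such that each point of $X$ lies in exactly $\alpha$ blocks of each class; the number of classes is then $\rho=r/\alpha$. The design is even if it is $\alpha$-resolvable for some $\alpha$ with $\rho$ even. A zero-sum $2$-flow is a map $f:\mathcal{B}\to\{\pm1\}$ such that $\sum_{B\ni x} f(B)=0$ for every $x\in X$. *)

(* Defs.v *)
From mathcomp Require Import all_boot all_order all_algebra.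
Set Implicit Arguments. Unset Strict Implicit. Unset Printing Implicit Defensive.
Import GRing.Theory Num.Theory.

(* A (possibly multi-)collection of blocks is given as a family
   blk : I -> {set X} indexed by a finite type I (repeated blocks allowed). *)

Definition is_design (X I : finType) (blk : I -> {set X}) (t v k lam : nat) : Prop :=
  [/\ #|X| = v,
      (forall i : I, #|blk i| = k) &
      (forall T : {set X}, #|T| = t -> #|[set i : I | T \subset blk i]| = lam)].

Definition alpha_resolution (X I : finType) (blk : I -> {set X}) (alpha rho : nat)
    (cls : I -> 'I_rho) : Prop :=
  [/\ 0 < alpha,
      (forall j : 'I_rho, exists i : I, cls i = j) &
      (forall (j : 'I_rho) (x : X), #|[set i : I | (cls i == j) && (x \in blk i)]| = alpha)].

Definition even_design (X I : finType) (blk : I -> {set X}) : Prop :=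
  exists (alpha rho : nat) (cls : I -> 'I_rho),
    @alpha_resolution X I blk alpha rho cls /\ ~~ odd rho.

Definition zero_sum_2flow (X I : finType) (blk : I -> {set X}) (f : I -> int) : Prop :=
  (forall i : I, f i = 1%R \/ f i = (-1)%R) /\
  (forall x : X, (\sum_(i : I | x \in blk i) f i)%R = 0%R).

(* Main.v *)
Require Import Defs.
From mathcomp Require Import all_boot all_order all_algebra zify.
Set Implicit Arguments. Unset Strict Implicit. Unset Printing Implicit Defensive.
Import GRing.Theory Num.Theory.

Definition gC (n t : nat) := 'C(n, t) - 'C(n.-1, t).

Lemma card_sub_with (X : finType) (A : {set X}) x t : x \in A ->
  #|[set T : {set X} | (T \subset A) && (x \in T) && (#|T| == t)]| = gC #|A| t.
Proof.
move=> xA.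
have -> : [set T : {set X} | (T \subset A) && (x \in T) && (#|T| == t)] =
  [set T : {set X} | T \subset A & #|T| == t] :\: [set T : {set X} | T \subset A :\ x & #|T| == t].
  apply/setP => T; rewrite !inE subsetD1.
  by case: (T \subset A); case: (x \in T); case: (#|T| == t).
rewrite cardsD.
have -> : [set T : {set X} | T \subset A & #|T| == t] :&: [set T : {set X} | T \subset A :\ x & #|T| == t]
   = [set T : {set X} | T \subset A :\ x & #|T| == t].
  apply/setP => T; rewrite !inE subsetD1.
  by case: (T \subset A); case: (x \in T); case: (#|T| == t).
by rewrite !cards_draws (cardsD1 x A) xA.
Qed.

Lemma gC_gt0 n t : 0 < t -> t <= n -> 0 < gC n t.
Proof.
case: n => [|n]; case: t => [|t] //= _ le.
rewrite /gC binS addKn bin_gt0; exact: le.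
Qed.

Lemma design_r (X I : finType) (blk : I -> {set X}) (t v k lam : nat) :
  (0 < t)%N -> (t <= k)%N ->
  is_design blk t v k lam ->
  forall x, #|[set i | x \in blk i]| * gC k t = gC v t * lam.
Proof.
move=> t0 tk [hv hk hl] x.
pose N := \sum_(i : I) \sum_(T : {set X}) ([&& T \subset blk i, x \in T & #|T| == t] : nat).
have E1 : N = #|[set i | x \in blk i]| * gC k t.
  rewrite /N -sum_nat_const [RHS]big_mkcond.
  apply: eq_bigr => i _; rewrite inE.
  case xb: (x \in blk i).
    rewrite -(hk i) -(card_sub_with t xb) -sum1_card [RHS]big_mkcond.
    by apply: eq_bigr => T _; rewrite inE andbA.
  rewrite big1 // => T _.
  case sT: (T \subset blk i) => //; case xT: (x \in T) => //.
  by rewrite (subsetP sT _ xT) in xb.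
have E2' : \sum_(T : {set X}) \sum_(i : I) ([&& T \subset blk i, x \in T & #|T| == t] : nat) = gC v t * lam.
  have <- : #|[set T : {set X} | (T \subset setT) && (x \in T) && (#|T| == t)]| = gC v t.
    by rewrite card_sub_with ?inE // cardsT hv.
  rewrite -sum_nat_const [RHS]big_mkcond.
  apply: eq_bigr => T _; rewrite [in RHS]in_set [in RHS]subsetT [in RHS]andTb.
  case xT: (x \in T); case tT: (#|T| == t); rewrite ?[in RHS]andbT ?[in RHS]andbF.
  - rewrite -(hl T (eqP tT)) -sum1_card [RHS]big_mkcond.
    by apply: eq_bigr => i _; rewrite inE !andbT; case: (T \subset blk i).
  all: try by rewrite big1 // => i _; rewrite ?andbF.
have E2 : N = gC v t * lam by rewrite /N exchange_big; exact: E2'.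
by rewrite -E1 -E2.
Qed.

Lemma sum_const_card (I : finType) (P : pred I) (c : int) :
  (\sum_(i | P i) c)%R = (c *+ #|[set i | P i]|)%R.
Proof. rewrite -sumr_const; apply: eq_bigl => i; by rewrite inE. Qed.

Lemma alt_sum m : (\sum_(j < m.*2) ((-1) ^+ j : int))%R = 0%R.
Proof.
rewrite -(big_mkord xpredT (fun j => ((-1) ^+ j : int)%R)).
elim: m => [|m IH]; first by rewrite big_geq.
rewrite doubleS !big_nat_recr //= IH add0r exprS -signr_odd odd_double expr0.
by rewrite mulr1 addrN.
Qed.

Theorem mainTheorem11 (X I : finType) (blk : I -> {set X}) (t v k lam : nat) :
  (0 < t)%N -> (t <= k)%N ->
  is_design blk t v k lam ->
  (exists f : I -> int, zero_sum_2flow blk f) <-> even_design blk.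
Proof.
move=> t0 tk hd; split.
- move=> [f [pm fs]].
  have hr := design_r t0 tk hd.
  have [_ hk _] := hd.
  pose P x := #|[set i | (x \in blk i) && (f i == 1%R)]|.
  pose M x := #|[set i | (x \in blk i) && ~~ (f i == 1%R)]|.
  have PM x : P x = M x.
    have := fs x; rewrite (bigID (fun i => f i == 1%R)) /=.
    rewrite (eq_bigr (fun _ => 1%R)); last by move=> i /andP[_ /eqP].
    rewrite [X in (_ + X)%R](eq_bigr (fun _ => (-1)%R)); last first.
      by move=> i /andP[_]; case: (pm i) => ->.
    rewrite !sum_const_card mulNrn => /eqP; rewrite subr_eq0 eqr_nat => /eqP.
    by [].
  have RPM x : #|[set i | x \in blk i]| = P x + M x.
    rewrite -(cardsID [set i | f i == 1%R] [set i | x \in blk i]).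
    by rewrite /P /M; apply: f_equal2; apply: eq_card => i; rewrite !inE; case: (x \in blk i); case: (f i == 1%R).
  have gpos : 0 < gC k t by apply: gC_gt0 => //.
  have Rc x y : #|[set i | x \in blk i]| = #|[set i | y \in blk i]|.
    by apply/eqP; rewrite -(eqn_pmul2r gpos) !hr.
  have Pc x y : P x = P y.
    have := Rc x y; rewrite !RPM -!PM; lia.
  case: (pickP (fun _ : I => true)) => [i0 _ | none]; last first.
    have cls : I -> 'I_0 by move=> i; have := none i.
    exists 1, 0, cls; split => //; split => //; by case.
  have : 0 < #|blk i0| by rewrite hk; exact: leq_trans t0 tk.
  rewrite card_gt0 => /set0Pn [x0 hx0].
  have r0 : 0 < #|[set i | x0 \in blk i]|.
    by apply/card_gt0P; exists i0; rewrite inE.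
  have P0 : 0 < P x0 by move: r0; rewrite RPM -PM; lia.
  have M0 : 0 < M x0 by rewrite -PM.
  pose cls i : 'I_2 := if f i == 1%R then ord0 else ord_max.
  exists (P x0), 2, cls; split => //; split => //.
  + case=> [[|[|j]] hj] //.
    * move: P0; rewrite card_gt0 => /set0Pn [i]; rewrite inE => /andP[_ fi].
      by exists i; apply: val_inj; rewrite /cls fi.
    * move: M0; rewrite card_gt0 => /set0Pn [i]; rewrite inE => /andP[_ fi].
      by exists i; apply: val_inj; rewrite /cls (negbTE fi).
  + case=> [[|[|j]] hj] x //.
    * rewrite -(Pc x) /P; apply: eq_card => i; rewrite !inE /cls.
      by case: (f i == 1%R); rewrite ?andbT ?andbF.
    * rewrite -(Pc x) PM /M; apply: eq_card => i; rewrite !inE /cls.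
      by case: (f i == 1%R); rewrite ?andbT ?andbF.
- move=> [alpha [rho [cls [[a0 surj hcl] ev]]]].
  exists (fun i => ((-1) ^+ (cls i))%R); split.
    move=> i; rewrite -signr_odd; case: odd; [right|left]; by rewrite ?expr1 ?expr0.
  move=> x.
  rewrite (partition_big cls xpredT) //.
  transitivity (\sum_(j < rho) (((-1) ^+ j : int) *+ alpha))%R.
    apply: eq_bigr => j _.
    rewrite (eq_bigr (fun _ => ((-1) ^+ j : int)%R)); last by move=> i /andP[_ /eqP ->].
    rewrite sum_const_card -(hcl j x); congr (_ *+ _)%R.
    by apply: eq_card => i; rewrite !inE andbC.
  rewrite sumrMnl.
  have := odd_double_half rho; rewrite (negbTE ev) add0n => <-.
  by rewrite alt_sum mul0rn.
Qed.
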